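(* Let $(\alpha,\beta)\in Q$. Then the GAFS sequence satisfies, for all $k\ge0$: (1) $Ax_{k+1}=b$; (2) $x_{k+1}>0$; (3) $c^Tx_{k+1}<c^Tx_k$.
   Context: Let $A\in\mathbb{R}^{m\times n}$ have rank $m$, $b\in\mathbb{R}^m$, $c\in\mathbb{R}^n$. Primal LP: $\min c^Tx$ s.t. $Ax=b$, $x\ge 0$; dual LP: $\max b^Ty$ s.t. $A^Ty+s=c$, $s\ge 0$. Standing assumptions: the primal has a strictly positive feasible point; $c^Tx$ is not constant on the primal feasible region; the LP has an optimal solution. For $u\in\mathbb{R}^n$, $\gamma(u)=\max\{u_i: u_i>0\}$; $\|\cdot\|$ is the Euclidean norm. For $x>0$, $X=\mathrm{diag}(x)$. GAFS sequence: fix $\alpha\in(0,1)$, $\beta\in[0,1)$, and $x_0>0$ with $Ax_0=b$. For $k\ge0$ let $X_k=\mathrm{diag}(x_k)$, $y_k=(AX_k^2A^T)^{-1}AX_k^2c$, $s_k=c-A^Ty_k$. Set $x_1=x_0-\alpha\frac{X_0^2s_0}{\gamma(X_0s_0)}$ and, for $k\ge1$, $x_{k+1}=x_k-\alpha\frac{X_k^2s_k}{\gamma(X_ks_k)}+\beta\frac{x_k-x_{k-1}}{\|X_k^{-1}(x_k-x_{k-1})\|_\infty}$ (it is assumed all quantities are well defined). $Q=\{(\alpha,\beta): 0<\alpha<1,\ 0\le\beta<1/\phi,\ \alpha+\beta\le 2/3\}$ with $\phi=(1+\sqrt5)/2$. *)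

(* Defs.v *)
From HB Require Import structures.
From mathcomp Require Import all_boot all_order all_algebra.
Set Implicit Arguments. Unset Strict Implicit. Unset Printing Implicit Defensive.
Import Order.TTheory GRing.Theory Num.Theory.
Local Open Scope ring_scope.

Section GAFS.
Variables (R : rcfType) (m n : nat).
Implicit Types (x u : 'cV[R]_n).

Definition Xdiag x : 'M[R]_n := diag_mx x^T.
Definition Xinv x : 'M[R]_n := diag_mx (map_mx (fun t => t^-1) x^T).

(* gamma(u) = max { u_i : u_i > 0 } (0 if the set is empty; only used when it is not) *)
Definition gammaP u : R := \big[Num.max/0]_(i | 0 < u i 0) u i 0.
Definition infnorm u : R := \big[Num.max/0]_i `|u i 0|.
Definition dotv (v w : 'cV[R]_n) : R := (v^T *m w) 0 0.

Variables (A : 'M[R]_(m, n)) (b : 'cV[R]_m) (c : 'cV[R]_n).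

Definition yk x : 'cV[R]_m :=
  invmx (A *m (Xdiag x ^+ 2) *m A^T) *m (A *m (Xdiag x ^+ 2) *m c).
Definition sk x : 'cV[R]_n := c - A^T *m yk x.

Definition as_step (alpha : R) x : 'cV[R]_n :=
  x - (alpha / gammaP (Xdiag x *m sk x)) *: (Xdiag x ^+ 2 *m sk x).

(* full step with momentum: x_{k+1} from x_{k-1} = xp and x_k = x *)
Definition mom_step (alpha beta : R) (xp x : 'cV[R]_n) : 'cV[R]_n :=
  as_step alpha x + (beta / infnorm (Xinv x *m (x - xp))) *: (x - xp).

(* gafs_pair k = (x_k, x_{k+1}) *)
Fixpoint gafs_pair (alpha beta : R) (x0 : 'cV[R]_n) (k : nat) : 'cV[R]_n * 'cV[R]_n :=
  match k with
  | O => (x0, as_step alpha x0)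
  | S k' => let p := gafs_pair alpha beta x0 k' in (p.2, mom_step alpha beta p.1 p.2)
  end.

Definition gafs (alpha beta : R) (x0 : 'cV[R]_n) (k : nat) : 'cV[R]_n :=
  (gafs_pair alpha beta x0 k).1.

Definition primal_feasible x : Prop := A *m x = b /\ forall i, 0 <= x i 0.

(* "all quantities are well defined" along the sequence *)
Definition gafs_well_defined (alpha beta : R) (x0 : 'cV[R]_n) : Prop :=
  forall k : nat,
    let xk := gafs alpha beta x0 k in
    (A *m (Xdiag xk ^+ 2) *m A^T \in unitmx)
    /\ (exists i, 0 < (Xdiag xk *m sk xk) i 0)
    /\ (forall i, xk i 0 != 0)
    /\ ((0 < k)%N -> infnorm (Xinv xk *m (xk - gafs alpha beta x0 k.-1)) != 0).

End GAFS.

Definition phi (R : rcfType) : R := (1 + Num.sqrt 5) / 2.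

Definition inQ (R : rcfType) (alpha beta : R) : Prop :=
  0 < alpha /\ alpha < 1 /\ 0 <= beta /\ beta < (phi R)^-1 /\ alpha + beta <= 2 / 3.

(* Main.v *)
Require Import Defs.
From HB Require Import structures.
From mathcomp Require Import all_boot all_order all_algebra.
From mathcomp Require Import ring lra.
Import Order.TTheory GRing.Theory Num.Theory.
Local Open Scope ring_scope.

Section L.
Variables (R : rcfType) (m n : nat) (A : 'M[R]_(m, n)) (c : 'cV[R]_n).
Implicit Types (x v : 'cV[R]_n).

Lemma XdE x v i : (Xdiag x *m v) i 0 = x i 0 * v i 0.
Proof. by rewrite /Xdiag mul_diag_mx !mxE. Qed.

Lemma XiE x v i : (Xinv x *m v) i 0 = (x i 0)^-1 * v i 0.
Proof. by rewrite /Xinv mul_diag_mx !mxE. Qed.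

Lemma X2E x v : Xdiag x ^+ 2 *m v = Xdiag x *m (Xdiag x *m v).
Proof. by rewrite expr2 -mulmxE mulmxA. Qed.

Lemma A_step0 x : A *m (Xdiag x ^+ 2) *m A^T \in unitmx ->
  A *m (Xdiag x ^+ 2 *m sk A c x) = 0.
Proof.
move=> U; rewrite /sk /yk.
set M := A *m Xdiag x ^+ 2 *m A^T in U *; set w := A *m Xdiag x ^+ 2 *m c.
have E : forall z : 'cV[R]_m, A *m (Xdiag x ^+ 2 *m (A^T *m z)) = M *m z.
  by move=> z; rewrite /M [in LHS]mulmxA [in LHS]mulmxA.
by rewrite mulmxBr mulmxBr E mulKVmx // /w [in X in X - _]mulmxA subrr.
Qed.

Lemma dotvE v w : dotv v w = \sum_i v i 0 * w i 0.
Proof. by rewrite /dotv mxE; apply: eq_bigr => i _; rewrite mxE. Qed.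

Lemma dot_step x : A *m (Xdiag x ^+ 2) *m A^T \in unitmx ->
  dotv c (Xdiag x ^+ 2 *m sk A c x) =
  \sum_i (Xdiag x *m sk A c x) i 0 ^+ 2.
Proof.
move=> U; have Z := @A_step0 x U.
move: Z; set s := sk A c x; set y := yk A c x => Z.
have -> : c = s + A^T *m y by rewrite /s /sk subrK.
rewrite /dotv linearD /= mulmxDl trmx_mul trmxK -(mulmxA y^T) Z mulmx0 addr0.
rewrite -/(dotv s _) dotvE.
apply: eq_bigr => i _.
rewrite X2E !XdE expr2; ring.
Qed.

Lemma gamma_ge (w : 'cV[R]_n) i : (exists j, 0 < w j 0) -> w i 0 <= gammaP w.
Proof.
case=> j hj; rewrite /gammaP.
have hg : w j 0 <= \big[Num.max/0]_(i | 0 < w i 0) w i 0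
  by exact: (@le_bigmax_cond _ R _ 0 j (fun i => 0 < w i 0) (fun i => w i 0)).
case: (ltP 0 (w i 0)) => hi; first exact: (@le_bigmax_cond _ R _ 0 i (fun i => 0 < w i 0) (fun i => w i 0)).
exact: le_trans hi (le_trans (ltW hj) hg).
Qed.

Lemma gamma_pos (w : 'cV[R]_n) : (exists j, 0 < w j 0) -> 0 < gammaP w.
Proof. move=> h; case: (h) => j hj; exact: lt_le_trans hj (@gamma_ge w j h). Qed.

Lemma inf_ge (v : 'cV[R]_n) i : `|v i 0| <= infnorm v.
Proof. by rewrite /infnorm; exact: (@le_bigmax _ R _ 0 (fun i => `|v i 0|) i). Qed.

Lemma dotvD v w z : dotv v (w + z) = dotv v w + dotv v z.
Proof. by rewrite !dotvE -big_split; apply: eq_bigr => i _; rewrite mxE mulrDr. Qed.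

Lemma dotvN v w : dotv v (- w) = - dotv v w.
Proof. by rewrite !dotvE -sumrN; apply: eq_bigr => i _; rewrite mxE mulrN. Qed.

Lemma dotvZ v a w : dotv v (a *: w) = a * dotv v w.
Proof. by rewrite !dotvE mulr_sumr; apply: eq_bigr => i _; rewrite mxE mulrCA. Qed.

Lemma subZE (x v : 'cV[R]_n) t i : (x - t *: v) i 0 = x i 0 - t * v i 0.
Proof. by rewrite !mxE. Qed.

Section Step.
Variables (alpha : R) (x : 'cV[R]_n).
Hypothesis (U : A *m (Xdiag x ^+ 2) *m A^T \in unitmx)
  (Hw : exists i, 0 < (Xdiag x *m sk A c x) i 0) (Hx : forall i, 0 < x i 0).

Lemma as_A : A *m as_step A c alpha x = A *m x.
Proof. by rewrite /as_step mulmxBr -scalemxAr (@A_step0 x U) scaler0 subr0. Qed.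

Lemma as_entry i : 0 <= alpha -> (1 - alpha) * x i 0 <= as_step A c alpha x i 0.
Proof.
move=> ha; rewrite /as_step subZE X2E XdE.
have Hw2 := Hw.
set w := Xdiag x *m sk A c x in Hw2 *; set g := gammaP w.
have gp : 0 < g := @gamma_pos w Hw2.
have h : w i 0 / g <= 1 by rewrite ler_pdivrMr // mul1r; exact: (@gamma_ge w i Hw2).
have e : alpha / g * (x i 0 * w i 0) = alpha * x i 0 * (w i 0 / g).
  by rewrite /=; ring.
rewrite e.
have hax : 0 <= alpha * x i 0 by rewrite mulr_ge0 // ltW.
have := ler_wpM2l hax h; rewrite mulr1 => h2.
lra.
Qed.

Lemma as_dot : 0 < alpha -> dotv c (as_step A c alpha x) < dotv c x.
Proof.
move=> ha; rewrite /as_step dotvD dotvN dotvZ (@dot_step x U).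
have Hw2 := Hw.
set w := Xdiag x *m sk A c x in Hw2 *.
have gp : 0 < gammaP w := @gamma_pos w Hw2.
have Sp : 0 < \sum_i w i 0 ^+ 2.
  case: Hw2 => j hj; rewrite (bigD1 j) //=.
  have : 0 <= \sum_(i | i != j) w i 0 ^+ 2 by apply: sumr_ge0 => i _; exact: sqr_ge0.
  have : 0 < w j 0 ^+ 2 by rewrite exprn_gt0.
  lra.
have : 0 < alpha / gammaP w * \sum_i w i 0 ^+ 2 by rewrite mulr_gt0 // divr_gt0.
lra.
Qed.

Variables (beta : R) (xp : 'cV[R]_n).

Lemma mom_A : A *m xp = A *m x -> A *m mom_step A c alpha beta xp x = A *m x.
Proof.
move=> h; rewrite /mom_step mulmxDr as_A -scalemxAr.
have -> : A *m (x - xp) = 0 by rewrite mulmxBr h subrr.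
by rewrite scaler0 addr0.
Qed.

Lemma N_ge (i : 'I_n) : 0 <= infnorm (Xinv x *m (x - xp)).
Proof. exact: le_trans (normr_ge0 _) (inf_ge _ i). Qed.

Lemma mom_entry i : 0 <= alpha -> 0 <= beta -> infnorm (Xinv x *m (x - xp)) != 0 ->
  (1 - alpha - beta) * x i 0 <= mom_step A c alpha beta xp x i 0.
Proof.
move=> ha hb hN; rewrite /mom_step mxE [X in _ <= _ + X]mxE.
have h1 := as_entry i ha.
set N := infnorm _ in hN *.
have Np : 0 < N by rewrite lt_neqAle eq_sym hN N_ge.
set d := x - xp.
have hq := inf_ge (Xinv x *m d) i; rewrite XiE -/N in hq.
set q := (x i 0)^-1 * d i 0 in hq.
have hxi := Hx i.
have ed : d i 0 = x i 0 * q by rewrite /q mulrA mulfV ?mul1r // gt_eqF.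
have hqN : -1 <= q / N.
  rewrite ler_pdivlMr //; move: hq; rewrite ler_norml => /andP[h _]; lra.
have e : beta / N * d i 0 = beta * x i 0 * (q / N) by rewrite ed /=; ring.
rewrite e.
have hbx : 0 <= beta * x i 0 by rewrite mulr_ge0 // ltW.
have := ler_wpM2l hbx hqN.
lra.
Qed.

Lemma mom_dot : 0 < alpha -> 0 <= beta -> dotv c x < dotv c xp ->
  dotv c (mom_step A c alpha beta xp x) < dotv c x.
Proof.
move=> ha hb hd; rewrite /mom_step dotvD dotvZ dotvD dotvN.
have h1 := as_dot ha.
case: Hw => j _.
have := N_ge j; set N := infnorm _ => hN.
have : 0 <= beta / N by rewrite divr_ge0.
set t := beta / N => ht.
have : t * (dotv c x - dotv c xp) <= 0.
  by rewrite mulr_ge0_le0 // subr_le0 ltW.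
lra.
Qed.
End Step.
End L.
Theorem theorem2 (R : rcfType) (m n : nat)
  (A : 'M[R]_(m, n)) (b : 'cV[R]_m) (c : 'cV[R]_n)
  (alpha beta : R) (x0 : 'cV[R]_n) :
  \rank A = m ->
  (* the primal has a strictly positive feasible point *)
  (exists xs : 'cV[R]_n, A *m xs = b /\ forall i, 0 < xs i 0) ->
  (* c^T x is not constant on the primal feasible region *)
  (exists x1 x2 : 'cV[R]_n, primal_feasible A b x1 /\ primal_feasible A b x2 /\
       dotv c x1 != dotv c x2) ->
  (* the LP has an optimal solution *)
  (exists xo : 'cV[R]_n, primal_feasible A b xo /\
       forall x, primal_feasible A b x -> dotv c xo <= dotv c x) ->
  inQ alpha beta ->
  (forall i, 0 < x0 i 0) -> A *m x0 = b ->
  gafs_well_defined A c alpha beta x0 ->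
  forall k : nat,
    A *m gafs A c alpha beta x0 k.+1 = b /\
    (forall i, 0 < gafs A c alpha beta x0 k.+1 i 0) /\
    dotv c (gafs A c alpha beta x0 k.+1) < dotv c (gafs A c alpha beta x0 k).

Proof.
move=> _ _ _ _ [ha [ha1 [hb [hb1 hab]]]] Hx0 HA0 WD.
have key : forall k,
  [/\ A *m gafs A c alpha beta x0 k = b, (forall i, 0 < gafs A c alpha beta x0 k i 0),
      A *m gafs A c alpha beta x0 k.+1 = b, (forall i, 0 < gafs A c alpha beta x0 k.+1 i 0)
    & dotv c (gafs A c alpha beta x0 k.+1) < dotv c (gafs A c alpha beta x0 k)].
  elim => [|k [IH1 IH2 IH3 IH4 IH5]].
    have [U [Hw _]] := WD 0%N.
    have e0 : gafs A c alpha beta x0 0 = x0 by [].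
    have e1 : gafs A c alpha beta x0 1 = as_step A c alpha x0 by [].
    rewrite e1 e0.
    split => //.
    - by rewrite as_A.
    - move=> i; have := @as_entry _ _ _ A c alpha x0 Hw Hx0 i (ltW ha).
      have : 0 < (1 - alpha) * x0 i 0 by rewrite mulr_gt0 // subr_gt0.
      lra.
    - exact: as_dot.
  have [U [Hw [_ hN]]] := WD k.+1.
  have e2 : gafs A c alpha beta x0 k.+2 =
     mom_step A c alpha beta (gafs A c alpha beta x0 k) (gafs A c alpha beta x0 k.+1) by [].
  simpl in hN; have {}hN := hN isT.
  rewrite e2; split => //.
  - by rewrite mom_A // IH1 IH3.
  - move=> i; have := @mom_entry _ _ _ A c alpha _ Hw IH4 beta _ i (ltW ha) hb hN.
    have : 0 < (1 - alpha - beta) * gafs A c alpha beta x0 k.+1 i 0.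
      by rewrite mulr_gt0 //; lra.
    lra.
  - exact: mom_dot.
move=> k; have [_ _ ? ? ?] := key k; by [].
Qed.
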